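(* Let $G$ be a compact group and $\alpha$ an automorphism of $G$ such that $(G,\alpha)$ is topologically transitive and has finite depth. Let $V$ be an open normal subgroup of $G$ with $\bigcap_{k\in\mathbb{Z}}\alpha^k(V)=\{1\}$ and $V=V_+V_-$. Then (1) there is $k\in\mathbb{N}$ such that $\alpha^k(V_+)V_-=G$; and (2) $\bigcup_{n\in\mathbb{N}}\big(\alpha^n(V_+)\cap\alpha^{-n}(V_-)\big)$ is dense in $G$.
   Context: $V_+=\bigcap_{k\ge0}\alpha^k(V)$, $V_-=\bigcap_{k\ge0}\alpha^{-k}(V)$. $(G,\alpha)$ is topologically transitive if some orbit $\{\alpha^n(x):n\in\mathbb{Z}\}$ is dense in $G$; it has finite depth if there is an open subgroup $U\le G$ with $\bigcap_{k\in\mathbb{Z}}\alpha^k(U)=\{1\}$. *)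

(* Defs.v *)
(* an abstract (possibly non-abelian) topological
   group is given by a carrier topologicalType T and explicit operations. *)
From mathcomp Require Import all_boot all_algebra.
From mathcomp Require Import all_classical all_reals all_analysis.
Set Implicit Arguments. Unset Strict Implicit. Unset Printing Implicit Defensive.
Local Open Scope classical_set_scope.

Section TopGroup.
Context {T : topologicalType}.
Variables (mul : T -> T -> T) (inv : T -> T) (one : T).

Definition group_axioms : Prop :=
  [/\ forall x y z, mul x (mul y z) = mul (mul x y) z,
      forall x, mul one x = x, forall x, mul x one = x,
      forall x, mul (inv x) x = one & forall x, mul x (inv x) = one].

Definition topological_group : Prop :=
  group_axioms /\
  continuous (fun p : T * T => mul p.1 p.2) /\ continuous inv.

Definition compact_group : Prop :=
  topological_group /\ compact [set: T] /\ hausdorff_space T.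

Definition is_subgroup (H : set T) : Prop :=
  [/\ H one, forall x y, H x -> H y -> H (mul x y) & forall x, H x -> H (inv x)].

Definition is_normal (H : set T) : Prop :=
  is_subgroup H /\ forall g h, H h -> H (mul (mul g h) (inv g)).

Definition setmul (A B : set T) : set T :=
  [set z | exists a b, [/\ A a, B b & z = mul a b]].

Definition top_automorphism (alpha : T -> T) : Prop :=
  [/\ forall x y, alpha (mul x y) = mul (alpha x) (alpha y),
      continuous alpha &
      exists beta : T -> T,
        [/\ cancel alpha beta, cancel beta alpha & continuous beta]].

(* alpha^k(A) for k an integer; for negative k this is the image under
   alpha^{-1}, i.e. the preimage under alpha^{|k|} (alpha is bijective). *)
Definition apow (alpha : T -> T) (k : int) (A : set T) : set T :=
  match k with
  | Posz n => iter n alpha @` A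
  | Negz n => iter n.+1 alpha @^-1` A
  end.

Definition Vplus (alpha : T -> T) (V : set T) : set T :=
  \bigcap_(k in [set: nat]) apow alpha (Posz k) V.
Definition Vminus (alpha : T -> T) (V : set T) : set T :=
  \bigcap_(k in [set: nat]) apow alpha (- Posz k)%R V.

Definition orbit (alpha : T -> T) (x : T) : set T :=
  \bigcup_(n in [set: int]) apow alpha n [set x].

Definition top_transitive (alpha : T -> T) : Prop :=
  exists x, dense (orbit alpha x).

Definition finite_depth (alpha : T -> T) : Prop :=
  exists U : set T, [/\ open U, is_subgroup U &
    \bigcap_(k in [set: int]) apow alpha k U = [set one]].

End TopGroup.

(* Main.v *)
Require Import Defs.
From mathcomp Require Import all_boot all_algebra.
From mathcomp Require Import all_classical all_reals all_analysis.
From mathcomp Require Import zify.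
Local Open Scope classical_set_scope.
Set Implicit Arguments. Unset Strict Implicit.

Section Grp.
Context {T : topologicalType} (mul : T -> T -> T) (inv : T -> T) (one : T).
Hypothesis hgrp : group_axioms mul inv one.
Hypothesis hmulc : continuous (fun p : T * T => mul p.1 p.2).

Lemma gA x y z : mul x (mul y z) = mul (mul x y) z.
Proof. by case: hgrp. Qed.
Lemma g1x x : mul one x = x.
Proof. by case: hgrp. Qed.
Lemma gx1 x : mul x one = x.
Proof. by case: hgrp. Qed.
Lemma gVx x : mul (inv x) x = one.
Proof. by case: hgrp. Qed.
Lemma gxV x : mul x (inv x) = one.
Proof. by case: hgrp. Qed.

Lemma gKV x y : mul (inv x) (mul x y) = y.
Proof. by rewrite gA gVx g1x. Qed.
Lemma gVK x y : mul x (mul (inv x) y) = y.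
Proof. by rewrite gA gxV g1x. Qed.

Lemma inv_uniq x y : mul x y = one -> inv x = y.
Proof. by move=> h; rewrite -[inv x]gx1 -h gKV. Qed.

Lemma invK x : inv (inv x) = x.
Proof. by apply: inv_uniq; rewrite gVx. Qed.

Lemma invM x y : inv (mul x y) = mul (inv y) (inv x).
Proof. by apply: inv_uniq; rewrite -gA (gA y) gxV g1x gxV. Qed.

Lemma hom_one f : (forall x y, f (mul x y) = mul (f x) (f y)) -> f one = one.
Proof.
move=> hf; have e : f one = mul (f one) (f one) by rewrite -hf g1x.
have := gKV (f one) (f one); rewrite -e gVx => h; by rewrite -h.
Qed.

Lemma hom_inv f : (forall x y, f (mul x y) = mul (f x) (f y)) ->
  forall x, f (inv x) = inv (f x).
Proof.
move=> hf x; apply/esym/inv_uniq; by rewrite -hf gxV hom_one.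
Qed.

Lemma lmul_cont c : continuous (mul c).
Proof.
move=> x.
apply: (@continuous_comp _ _ _ (fun y => (c, y)) (fun p : T * T => mul p.1 p.2)).
  by apply: cvg_pair => /=; [exact: cvg_cst|exact: cvg_id].
exact: hmulc.
Qed.

Lemma rmul_cont c : continuous (mul^~ c).
Proof.
move=> x.
apply: (@continuous_comp _ _ _ (fun y => (y, c)) (fun p : T * T => mul p.1 p.2)).
  by apply: cvg_pair => /=; [exact: cvg_id|exact: cvg_cst].
exact: hmulc.
Qed.

Lemma open_sub (H A : set T) : is_subgroup mul inv one H -> open A ->
  A `<=` H -> A one -> open H.
Proof.
move=> [H1 HM HV] oA AH A1; rewrite openE => x Hx.
apply: (@filterS _ _ _ [set y | A (mul (inv x) y)]).
  move=> y /= Ay; rewrite -(gVK x y); apply: HM => //; exact: AH.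
apply: open_nbhs_nbhs; split => /=; last by rewrite gVx.
by apply: (open_comp (f := mul (inv x))) => // y _; apply: lmul_cont.
Qed.

Lemma opensub_closed (H : set T) : is_subgroup mul inv one H -> open H ->
  closed H.
Proof.
move=> [H1 HM HV] oH; rewrite -openC openE => x /= nHx.
apply: (@filterS _ _ _ [set y | H (mul (inv x) y)]).
  move=> y /= Hy Hy'; apply: nHx.
  have := HM _ _ Hy' (HV _ Hy); by rewrite invM invK gVK.
apply: open_nbhs_nbhs; split => /=; last by rewrite gVx.
by apply: (open_comp (f := mul (inv x))) => // y _; apply: lmul_cont.
Qed.

End Grp.

Lemma compact_incr (T : topologicalType) (F : nat -> set T) :
  compact [set: T] -> (forall n, open (F n)) ->
  (forall n m, (n <= m)%N -> F n `<=` F m) -> (forall x, exists n, F n x) ->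
  exists n, F n = [set: T].
Proof.
move=> cT oF mF cov.
case: (pselect (exists n, F n = [set: T])) => // nF; exfalso.
have ne : forall n, ~` F n !=set0.
  move=> n; case: (pselect (exists x, ~ F n x)) => [[x hx]|h]; first by exists x.
  exfalso; apply: nF; exists n.
  apply/seteqP; split => // x _; apply: contrapT => nx; apply: h; by exists x.
have fF : Filter (filter_from [set: nat] (fun n => ~` F n)).
  apply: filter_from_filter; first by exists 0%N.
  move=> i j _ _; exists (maxn i j) => // x /= nx; split => Fx; apply: nx.
    by apply: (mF i) => //; rewrite leq_maxl.
  by apply: (mF j) => //; rewrite leq_maxr.
have pF := filter_from_proper fF (fun i _ => ne i).
have [x [_ cx]] := cT _ pF (ex_intro2 _ _ 0%N I (fun _ _ => I)).
have [n Fnx] := cov x.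
have [y [/= nFy Fy]] := cx (~` F n) (F n) (ex_intro2 _ _ n I (fun _ h => h))
  (open_nbhs_nbhs (conj (oF n) Fnx)).
exact: nFy Fy.
Qed.

Section IterLemmas.
Context {T : Type} (f g : T -> T) (fK : cancel f g).

Lemma iter_can n : cancel (iter n f) (iter n g).
Proof.
elim: n => // n IH x; by rewrite iterSr iterS fK IH.
Qed.

Lemma iter_ge k n x : (n <= k)%N -> iter k g (iter n f x) = iter (k - n) g x.
Proof.
move=> nk; by rewrite -{1}(subnK nk) iterD iter_can.
Qed.

Lemma iter_le k n x : (k <= n)%N -> iter k g (iter n f x) = iter (n - k) f x.
Proof.
move=> kn; by rewrite -{1}(subnKC kn) iterD iter_can.
Qed.
End IterLemmas.

Lemma iter_cont (T : topologicalType) (f : T -> T) n :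
  continuous f -> continuous (iter n f).
Proof.
move=> fc; elim: n => [|n IH] x /=; first exact: cvg_id.
exact: (continuous_comp (IH x) (fc _)).
Qed.

Section Main.
Context {T : topologicalType} (mul : T -> T -> T) (inv : T -> T) (one : T).
Context (a b : T -> T) (V : set T).
Hypothesis hgrp : group_axioms mul inv one.
Hypothesis hmulc : continuous (fun p : T * T => mul p.1 p.2).
Hypothesis ahom : forall x y, a (mul x y) = mul (a x) (a y).
Hypothesis ac : continuous a.
Hypothesis bc : continuous b.
Hypothesis abK : cancel a b.
Hypothesis baK : cancel b a.
Hypothesis hVsub : is_subgroup mul inv one V.
Hypothesis hVnorm : forall g h, V h -> V (mul (mul g h) (inv g)).
Hypothesis hVopen : open V.

Definition Hb n := [set x | forall k, (n <= k)%N -> V (iter k b x)].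
Definition La n := [set x | forall k, (n <= k)%N -> V (iter k a x)].
Definition S n := setmul mul (Hb n) (La n).

Hypothesis hprod : forall x, V x -> exists p q, [/\ Hb 0 p, La 0 q & x = mul p q].
Hypothesis hcap : forall x, (forall k, V (iter k b x)) -> (forall k, V (iter k a x)) -> x = one.

Lemma bhom x y : b (mul x y) = mul (b x) (b y).
Proof. by apply: (can_inj abK); rewrite ahom !baK. Qed.

Lemma iter_hom f : (forall x y, f (mul x y) = mul (f x) (f y)) ->
  forall n x y, iter n f (mul x y) = mul (iter n f x) (iter n f y).
Proof. move=> hf; elim=> // n IH x y; by rewrite !iterS IH hf. Qed.

Lemma iaM n x y : iter n a (mul x y) = mul (iter n a x) (iter n a y).
Proof. exact: iter_hom. Qed.
Lemma ibM n x y : iter n b (mul x y) = mul (iter n b x) (iter n b y).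
Proof. exact: (@iter_hom b bhom n x y). Qed.
Lemma ia1 n : iter n a one = one.
Proof. exact: (hom_one hgrp (iaM n)). Qed.
Lemma ib1 n : iter n b one = one.
Proof. exact: (hom_one hgrp (ibM n)). Qed.
Lemma iaV n x : iter n a (inv x) = inv (iter n a x).
Proof. exact: (hom_inv hgrp (iaM n)). Qed.
Lemma ibV n x : iter n b (inv x) = inv (iter n b x).
Proof. exact: (hom_inv hgrp (ibM n)). Qed.

Lemma V1 : V one. Proof. by case: hVsub. Qed.
Lemma VM x y : V x -> V y -> V (mul x y). Proof. by case: hVsub => _ h _; apply: h. Qed.
Lemma VV x : V x -> V (inv x). Proof. by case: hVsub => _ _ h; apply: h. Qed.

Lemma Hb_sub n : is_subgroup mul inv one (Hb n).
Proof.
split.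
- by move=> k _; rewrite ib1; exact: V1.
- by move=> x y hx hy k nk; rewrite ibM; apply: VM; [apply: hx|apply: hy].
- by move=> x hx k nk; rewrite ibV; apply: VV; apply: hx.
Qed.

Lemma La_sub n : is_subgroup mul inv one (La n).
Proof.
split.
- by move=> k _; rewrite ia1; exact: V1.
- by move=> x y hx hy k nk; rewrite iaM; apply: VM; [apply: hx|apply: hy].
- by move=> x hx k nk; rewrite iaV; apply: VV; apply: hx.
Qed.

Lemma Hb_mono n m : (n <= m)%N -> Hb n `<=` Hb m.
Proof. move=> nm x h k mk; apply: h; exact: leq_trans mk. Qed.
Lemma La_mono n m : (n <= m)%N -> La n `<=` La m.
Proof. move=> nm x h k mk; apply: h; exact: leq_trans mk. Qed.

Lemma dec n x : V (iter n a x) -> S n x.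
Proof.
move=> h; have [p [q [p0 q0 e]]] := hprod h.
exists (iter n b p), (iter n b q); split.
- by move=> k _; rewrite -iterD; apply: p0.
- by move=> k nk; rewrite (iter_ge baK) //; apply: q0.
- by rewrite -ibM -e iter_can.
Qed.

Let gA := gA hgrp.
Let g1x := g1x hgrp.
Let gx1 := gx1 hgrp.
Let gVK := gVK hgrp.
Let gKV := gKV hgrp.
Let invK := invK hgrp.
Let invM := invM hgrp.

Lemma S_sub n : is_subgroup mul inv one (S n).
Proof.
have [H1 HM HV] := Hb_sub n; have [L1 LM LV] := La_sub n.
split.
- by exists one, one; split => //; rewrite g1x.
- move=> x y [u [v [Hu Lv ->]]] [u' [v' [Hu' Lv' ->]]].
  pose w := mul (inv u') (mul v u').
  have Vw : V (iter n a w).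
    rewrite /w !iaM iaV.
    have := hVnorm (inv (iter n a u')) (Lv n (leqnn n)).
    by rewrite invK -gA.
  have [p [q [Hp Lq e]]] := dec Vw.
  exists (mul u (mul u' p)), (mul q v'); split.
  + exact: (HM _ _ Hu (HM _ _ Hu' Hp)).
  + exact: LM.
  + rewrite -!gA; congr (mul u _); rewrite (gA p) -e /w -!gA gVK //.
- move=> x [u [v [Hu Lv ->]]].
  pose w := mul u (mul (inv v) (inv u)).
  have Vw : V (iter n a w).
    rewrite /w !iaM !iaV.
    have := hVnorm (iter n a u) (VV (Lv n (leqnn n))).
    by rewrite -gA.
  have [p [q [Hp Lq e]]] := dec Vw.
  exists (mul (inv u) p), q; split.
  + exact: (HM _ _ (HV _ Hu) Hp).
  + exact: Lq.
  + by rewrite -gA -e /w gKV invM.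
Qed.

Lemma S_mono n m : (n <= m)%N -> S n `<=` S m.
Proof.
move=> nm x [u [v [Hu Lv ->]]]; exists u, v; split => //.
exact: (Hb_mono nm). exact: (La_mono nm).
Qed.

Lemma S_open n : open (S n).
Proof.
apply: (open_sub hgrp hmulc (A := iter n a @^-1` V)).
- exact: S_sub.
- apply: open_comp => // x _; exact: iter_cont.
- by move=> x; apply: dec.
- by rewrite /= ia1; exact: V1.
Qed.

Lemma S_a n x : S n x -> S n.+1 (a x).
Proof.
move=> [u [v [Hu Lv ->]]]; exists (a u), (a v); split => //.
- by case=> // k nk; rewrite iterSr abK; apply: Hu.
- by move=> k nk; rewrite -iterSr; apply: Lv; apply: leqW; apply: ltnW.
Qed.

Lemma S_b n x : S n x -> S n.+1 (b x).
Proof.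
move=> [u [v [Hu Lv ->]]]; exists (b u), (b v); split => //.
- by move=> k nk; rewrite -iterSr; apply: Hu; apply: leqW; apply: ltnW.
- by case=> // k nk; rewrite iterSr baK; apply: Lv.
- by rewrite bhom.
Qed.

Hypothesis hcomp : compact [set: T].
Hypothesis htrans : exists x0, dense (Defs.orbit a x0).

Lemma S_iter_b n k x : S n x -> S (n + k) (iter k b x).
Proof. elim: k => [|k IH] h; first by rewrite addn0. by rewrite addnS /=; apply: S_b; apply: IH. Qed.
Lemma S_iter_a n k x : S n x -> S (n + k) (iter k a x).
Proof. elim: k => [|k IH] h; first by rewrite addn0. by rewrite addnS /=; apply: S_a; apply: IH. Qed.

Definition HU := \bigcup_(n in [set: nat]) S n.

Lemma HU_sub : is_subgroup mul inv one HU.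
Proof.
split.
- exists 0%N => //; have [] := S_sub 0; by [].
- move=> x y [n _ hx] [m _ hy]; exists (maxn n m) => //.
  have [_ M _] := S_sub (maxn n m); apply: M.
  exact: (S_mono (leq_maxl n m)). exact: (S_mono (leq_maxr n m)).
- move=> x [n _ hx]; exists n => //; have [_ _ I] := S_sub n; exact: I.
Qed.

Lemma HU_all x : HU x.
Proof.
have oH : open HU by apply: bigcup_open => n _; exact: S_open.
have cH : closed HU := opensub_closed hgrp hmulc HU_sub oH.
have [x0 dx] := htrans.
have Hx0 : HU x0.
  have [y [[m _ Sm] [[n|n] _ Oy]]] := dx HU (ex_intro _ one (let: And3 h _ _ := HU_sub in h)) oH.
  + case: Oy => t /= -> e; rewrite -e in Sm.
    exists (m + n)%N => //; rewrite -(iter_can abK n x0); exact: S_iter_b.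
  + have {}Oy : iter n.+1 a y = x0 := Oy; exists (m + n.+1)%N => //; rewrite -Oy; exact: S_iter_a.
apply: contrapT => nx.
have [y [nHy [[n|n] _ Oy]]] := dx (~` HU) (ex_intro _ x nx) (closed_openC cH).
- apply: nHy; case: Oy => t /= -> <-; case: Hx0 => m _ Sm.
  exists (m + n)%N => //; exact: S_iter_a.
- apply: nHy; have {}Oy : iter n.+1 a y = x0 := Oy; case: Hx0 => m _ Sm.
  exists (m + n.+1)%N => //; rewrite -(iter_can abK n.+1 y) Oy; exact: S_iter_b.
Qed.

Lemma exists_n0 : exists n0, S n0 = [set: T].
Proof.
apply: compact_incr => //; [exact: S_open|exact: S_mono|].
by move=> x; have [n _ h] := HU_all x; exists n.
Qed.

Definition Nm m := \bigcap_(k in [set k | (k <= m)%N])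
  (iter k b @^-1` V `&` iter k a @^-1` V).

Lemma Nm_closed m : closed (Nm m).
Proof.
have cV : closed V := opensub_closed hgrp hmulc hVsub hVopen.
apply: closed_bigI => k _; apply: closedI; apply: preimage_closed => // x _;
  exact: iter_cont.
Qed.

Lemma Nm_sub m : is_subgroup mul inv one (Nm m).
Proof.
split.
- by move=> k _; rewrite /= ia1 ib1; split; exact: V1.
- move=> x y hx hy k km; have [? ?] := hx k km; have [? ?] := hy k km.
  by rewrite /= ibM iaM; split; apply: VM.
- move=> x hx k km; have [? ?] := hx k km.
  by rewrite /= ibV iaV; split; apply: VV.
Qed.

Lemma Nm_norm m g h : Nm m h -> Nm m (mul (mul g h) (inv g)).
Proof.
move=> hh k km; have [h1 h2] := hh k km.
by rewrite /= !ibM !iaM ibV iaV; split; apply: hVnorm.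
Qed.

Lemma nbhd_base U : open U -> U one -> exists m, Nm m `<=` U.
Proof.
move=> oU U1.
pose F := fun m => ~` Nm m `|` U.
have h1 : forall n, open (F n).
  move=> n; rewrite /F; apply: openU; [rewrite openC; exact: Nm_closed| exact: oU].
have h2 : forall n m', (n <= m')%N -> F n `<=` F m'.
  move=> n m' nm x [h|h]; last by right.
  left => Nx; apply: h => k kn; apply: Nx; exact: leq_trans nm.
have h3 : forall x, exists n, F n x.
  move=> x; case: (pselect (U x)) => [Ux|nUx]; first by exists 0%N; right.
  case: (pselect (exists k, ~ V (iter k b x) \/ ~ V (iter k a x))) => [[k hk]|nk].
    exists k; left => Nk; have [j1 j2] := Nk k (leqnn k); by case: hk.
  exfalso; apply: nUx; suff -> : x = one by [].
  apply: hcap => k; apply: contrapT => nv; apply: nk; exists k; by [left|right].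
have [m hm] := compact_incr hcomp h1 h2 h3.
exists m => x Nx.
have : F m x by rewrite hm.
by case.
Qed.

Lemma gxyV x y : mul (mul x y) (inv y) = x.
Proof. by rewrite -gA (gxV hgrp) gx1. Qed.

Lemma dense_main : dense (\bigcup_(n in [set: nat]) (Hb n `&` La n)).
Proof.
move=> O [g Og] oO.
have [n0 hn0] := exists_n0.
have oU : open [set w | O (mul w g)].
  apply: (open_comp (f := mul^~ g)) => // x _; exact: rmul_cont.
have U1 : [set w | O (mul w g)] one by rewrite /= g1x.
have [m hm] := nbhd_base oU U1.
pose c := (n0 + m)%N.
have : S n0 g by rewrite hn0.
case=> u [v [Hu Lv e]].
have : S n0 (iter c a u) by rewrite hn0.
case=> p [q [Hp Lq e1]].
have : S n0 (iter c b v) by rewrite hn0.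
case=> p' [q' [Hp' Lq' e2]].
pose ua := iter c b p; pose ub := iter c b q.
pose va := iter c a p'; pose vb := iter c a q'.
have eu : u = mul ua ub by rewrite /ua /ub -ibM -e1 iter_can.
have ev : v = mul va vb by rewrite /va /vb -iaM -e2 iter_can.
have Nua : Nm m ua.
  move=> k /= km; split => /=.
    rewrite /ua -iterD; apply: Hp; rewrite /c; lia.
  rewrite /ua (iter_le baK); last by rewrite /c; lia.
  apply: Hp; rewrite /c; lia.
have Nvb : Nm m vb.
  move=> k /= km; split => /=.
    rewrite /vb (iter_le abK); last by rewrite /c; lia.
    apply: Lq'; rewrite /c; lia.
  rewrite /vb -iterD; apply: Lq'; rewrite /c; lia.
pose N := (c + n0)%N.
have [_ HbM HbV] := Hb_sub n0.
have [_ LaM LaV] := La_sub n0.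
have Hub : Hb N ub.
  apply: (Hb_mono (n := n0)); first by rewrite /N /c; lia.
  have -> : ub = mul (inv ua) u by rewrite eu gKV.
  apply: HbM => //; apply: HbV => k kn; rewrite /ua -iterD; apply: Hp; lia.
have Lub : La N ub.
  move=> k kN; rewrite /ub (iter_ge baK); last by rewrite /N in kN; lia.
  apply: Lq; rewrite /N in kN; lia.
have Hva : Hb N va.
  move=> k kN; rewrite /va (iter_ge abK); last by rewrite /N in kN; lia.
  apply: Hp'; rewrite /N in kN; lia.
have Lva : La N va.
  apply: (La_mono (n := n0)); first by rewrite /N /c; lia.
  have -> : va = mul v (inv vb) by rewrite ev gxyV.
  apply: LaM => //; apply: LaV => k kn; rewrite /vb -iterD; apply: Lq'; lia.
pose h := mul ub va.
exists h; split; last first.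
  exists N => //; split.
  - by have [_ M _] := Hb_sub N; apply: M.
  - by have [_ M _] := La_sub N; apply: M.
have eg : g = mul ua (mul h vb) by rewrite e eu ev /h -!gA.
have eh : h = mul (inv ua) (mul g (inv vb)) by rewrite eg -gA gKV gxyV.
have Nw : Nm m (mul h (inv g)).
  rewrite {1}eh -gA; have [_ M I] := Nm_sub m.
  exact: (M _ _ (I _ Nua) (Nm_norm g (I _ Nvb))).
have := hm _ Nw; by rewrite /= -gA (gVx hgrp) gx1.
Qed.

End Main.

Lemma apow_neg (T : topologicalType) (alpha : T -> T) (k : nat) (A : set T) :
  apow alpha (- Posz k)%R A = iter k alpha @^-1` A.
Proof.
case: k => [|k].
  rewrite GRing.oppr0 /=; apply/seteqP; split => x /=; first by case=> t At <-.
  by move=> Ax; exists x.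
by rewrite -NegzE.
Qed.

Unset Implicit Arguments. Set Strict Implicit.

Theorem proposition5p8 (T : topologicalType)
  (mul : T -> T -> T) (inv : T -> T) (one : T) (alpha : T -> T)
  (hG : compact_group mul inv one)
  (halpha : top_automorphism mul alpha)
  (htrans : top_transitive alpha)
  (hdepth : finite_depth mul inv one alpha)
  (V : set T)
  (hVopen : open V) (hVnormal : is_normal mul inv one V)
  (hVcap : \bigcap_(k in [set: int]) apow alpha k V = [set one])
  (hVprod : V = setmul mul (Vplus alpha V) (Vminus alpha V)) :
  (exists k : nat,
      setmul mul (apow alpha (Posz k) (Vplus alpha V)) (Vminus alpha V) = [set: T])
  /\ dense (\bigcup_(n in [set: nat])
              (apow alpha (Posz n) (Vplus alpha V)
               `&` apow alpha (- Posz n)%R (Vminus alpha V))).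
Proof.
case: hG => [[hgrp [hmulc _]] [hcomp _]].
case: halpha => ahom ac [beta [abK baK bc]].
case: hVnormal => hVsub hVnorm.
have hprod : forall x, V x -> exists p q,
    [/\ Hb beta V 0 p, La alpha V 0 q & x = mul p q].
  move=> x; rewrite {1}hVprod => -[p [q [Pp Mq ->]]]; exists p, q; split => //.
  - move=> k _; have [t Vt <-] := Pp k I; by rewrite iter_can.
  - move=> k _; have := Mq k I; by rewrite apow_neg.
have hcap : forall x, (forall k, V (iter k beta x)) ->
    (forall k, V (iter k alpha x)) -> x = one.
  move=> x hb ha.
  have : (\bigcap_(k in [set: int]) apow alpha k V) x.
    case=> [n|n] _ /=; last exact: (ha n.+1).
    by exists (iter n beta x) => //; rewrite iter_can.
  by rewrite hVcap.
have [n0 hn0] : exists n0, S mul alpha beta V n0 = [set: T].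
  exact: (exists_n0 hgrp hmulc ahom ac abK baK hVsub hVnorm hVopen hprod hcomp htrans).
have dm : dense (\bigcup_(n in [set: nat]) (Hb beta V n `&` La alpha V n)).
  exact: (dense_main hgrp hmulc ahom ac bc abK baK hVsub hVnorm hVopen hprod hcap hcomp htrans).
split.
  exists (n0 + n0)%N; apply/seteqP; split => // y _.
  have : S mul alpha beta V n0 (iter n0 beta y) by rewrite hn0.
  case=> u [v [Hu Lv e]].
  exists (iter n0 alpha u), (iter n0 alpha v); split.
  - exists (iter n0 beta u).
      move=> k _; exists (iter k beta (iter n0 beta u)); last by rewrite iter_can.
      by rewrite -iterD; apply: Hu; rewrite leq_addl.
    by rewrite iterD (iter_can baK).
  - move=> k _; rewrite apow_neg /= -iterD; apply: Lv; exact: leq_addl.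
  - by rewrite -(iaM ahom) -e (iter_can baK).
move=> O O0 oO; have [x [Ox [n _ [Hx Lx]]]] := dm O O0 oO.
exists x; split => //; exists n => //; split.
- exists (iter n beta x); last by rewrite iter_can.
  move=> k _; exists (iter k beta (iter n beta x)); last by rewrite iter_can.
  by rewrite -iterD; apply: Hx; rewrite leq_addl.
- rewrite apow_neg => k _; rewrite /= apow_neg /= -iterD; apply: Lx; exact: leq_addl.
Qed.
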